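(* Let $A$ be an associative ring (not necessarily commutative or unital), $n\ge 2$, $1\le k\le n-1$, and let $\omega\in PBr_n$, viewed as an element of $Br_n(A)$ via $y_i\mapsto y_i^0$. Then there exists $\omega'\in Br_n$ (depending on $k$ and $\omega$ but not on $a$) such that $y_k^a\,\omega = \omega'\,y_k^a$ in $Br_n(A)$ for every $a\in A$. Consequently, for every $k$ and every $a\in A$, the element $y_k^a (y_k^0)^{-1}\in Br_n(A)$ commutes with every element of $PBr_n$.
   Context: $Br_n(A)$ is the group generated by $y_i^a$, $1\le i\le n-1$, $a\in A$, with relations for all $a,b,c\in A$: $y_i^a y_i^0 y_i^b = y_i^0 y_i^0 y_i^{a+b}$; $y_i^a y_j^b = y_j^b y_i^a$ if $|i-j|\ge 2$; $y_i^a y_{i+1}^b y_i^c = y_{i+1}^c y_i^{b+ac} y_{i+1}^a$. The Artin braid group $Br_n$ (generators $y_i$, relations $y_iy_j=y_jy_i$ for $|i-j|\ge 2$, $y_iy_{i+1}y_i=y_{i+1}y_iy_{i+1}$) is identified with the subgroup of $Br_n(A)$ generated by the $y_i^0$ (i.e. with $Br_n(0)$). $PBr_n$ is the pure braid group, the kernel of the surjection $Br_n\to\mathcal S_n$, $y_i\mapsto (i\ i+1)$. *)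

(* Defs.v *)
From mathcomp Require Import all_boot all_order all_algebra all_fingroup.
Set Implicit Arguments. Unset Strict Implicit. Unset Printing Implicit Defensive.
Import GRing.Theory.
Local Open Scope ring_scope.

Section BrA.
Variables (n : nat) (A : zmodType) (mul : A -> A -> A).

(* A letter (i, a, e) stands for y_{i+1}^a if e = false, (y_{i+1}^a)^{-1} if e = true;
   indices i : 'I_(n.-1) encode 1 <= i+1 <= n-1. *)
Definition letter := ('I_n.-1 * A * bool)%type.
Definition word := seq letter.
Definition G (i : 'I_n.-1) (a : A) : letter := (i, a, false).
Definition Ginv (i : 'I_n.-1) (a : A) : letter := (i, a, true).
Definition flip (l : letter) : letter := (l.1, ~~ l.2).

Inductive br_eq : word -> word -> Prop :=
| br_refl w : br_eq w w
| br_sym w1 w2 : br_eq w1 w2 -> br_eq w2 w1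
| br_trans w1 w2 w3 : br_eq w1 w2 -> br_eq w2 w3 -> br_eq w1 w3
| br_ctx u v w1 w2 : br_eq w1 w2 -> br_eq (u ++ w1 ++ v) (u ++ w2 ++ v)
| br_free l : br_eq [:: l; flip l] [::]
| br_rel1 i a b :
    br_eq [:: G i a; G i 0; G i b] [:: G i 0; G i 0; G i (a + b)]
| br_rel2 (i j : 'I_n.-1) a b : (2 <= `|(i : nat) - (j : nat)|)%N ->
    br_eq [:: G i a; G j b] [:: G j b; G i a]
| br_rel3 (i j : 'I_n.-1) a b c : (j : nat) = i.+1 ->
    br_eq [:: G i a; G j b; G i c] [:: G j c; G i (b + mul a c); G j a].

End BrA.

(* Words in the Artin generators y_{i+1}^{±1} of Br_n (true = inverse). *)
Definition aword (n : nat) := seq ('I_n.-1 * bool).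

Definition embed (n : nat) (A : zmodType) (w : aword n) : word n A :=
  map (fun l => (l.1, 0, l.2)) w.

(* The image in S_n of an Artin word, y_{i+1} |-> transposition (i+1 i+2),
   written 0-based as tperm i (i+1) on 'I_(n.-1).+1 (= 'I_n since n >= 2). *)
Definition perm_of (n : nat) (w : aword n) : {perm 'I_(n.-1).+1} :=
  foldr (fun (l : 'I_n.-1 * bool) p => (tperm (inord (l.1 : nat) : 'I_(n.-1).+1) (inord (l.1 : nat).+1) * p)%g) 1%g w.

Definition pure (n : nat) (w : aword n) : Prop := perm_of w = 1%g.

(* Main.v *)
Require Import Defs.
From mathcomp Require Import all_boot all_order all_algebra all_fingroup.
From mathcomp Require Import zify.
Import GRing.Theory.
Local Open Scope ring_scope.

Section Work.
Variables (A : zmodType) (mul : A -> A -> A).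
Hypotheses (mulDl : left_distributive mul +%R) (mulDr : right_distributive mul +%R).
Variable m : nat.

Local Notation W := (word m.+2 A).
Local Notation eqw := (@br_eq m.+2 A mul).
Local Notation ltr i b e := ((inord i : 'I_m.+1), b, e).

Lemma eqw_refl (w : W) : eqw w w. Proof. exact: br_refl. Qed.
Lemma eqw_sym {w1 w2 : W} : eqw w1 w2 -> eqw w2 w1. Proof. exact: br_sym. Qed.
Lemma eqw_trans {w1 w2 w3 : W} : eqw w1 w2 -> eqw w2 w3 -> eqw w1 w3.
Proof. exact: br_trans. Qed.
Lemma eqw_catl (u : W) {w1 w2 : W} : eqw w1 w2 -> eqw (u ++ w1) (u ++ w2).
Proof. by move=> h; have := br_ctx u [::] h; rewrite !cats0. Qed.
Lemma eqw_catr (v : W) {w1 w2 : W} : eqw w1 w2 -> eqw (w1 ++ v) (w2 ++ v).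
Proof. by move=> h; have := br_ctx [::] v h. Qed.
Lemma eqw_cat {u1 u2 v1 v2 : W} : eqw u1 u2 -> eqw v1 v2 -> eqw (u1 ++ v1) (u2 ++ v2).
Proof. move=> h1 h2; exact: (eqw_trans (eqw_catr v1 h1) (eqw_catl u2 h2)). Qed.

Lemma freeb (i : 'I_m.+1) (b : A) (e : bool) : eqw [:: (i, b, e); (i, b, ~~ e)] [::].
Proof. exact: (@br_free m.+2 A mul (i, b, e)). Qed.
Lemma free1 (i : 'I_m.+1) (b : A) : eqw [:: (i, b, false); (i, b, true)] [::].
Proof. exact: (freeb i b false). Qed.
Lemma free2 (i : 'I_m.+1) (b : A) : eqw [:: (i, b, true); (i, b, false)] [::].
Proof. exact: (freeb i b true). Qed.

Lemma rw_at (k : nat) (P Q L R : W) : eqw P Q ->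
  L = take k L ++ P ++ drop (k + size P) L ->
  eqw (take k L ++ Q ++ drop (k + size P) L) R -> eqw L R.
Proof.
move=> hPQ E h; apply: eqw_trans h; rewrite {1}E; exact: br_ctx.
Qed.


End Work.
Arguments eqw_refl {A mul m} w.
Arguments eqw_sym {A mul m w1 w2}.
Arguments eqw_trans {A mul m w1 w2 w3}.
Arguments eqw_catl {A mul m} u {w1 w2}.
Arguments eqw_catr {A mul m} v {w1 w2}.
Arguments eqw_cat {A mul m u1 u2 v1 v2}.

Ltac cbw := cbv [take drop size addn addn_rec Nat.add cat negb].
Ltac rwk k H :=
  lazymatch goal with |- br_eq _ ?L ?R =>
    eapply (@rw_at _ _ _ k%N _ _ L R H); [cbw; reflexivity | cbw ]
  end.
Ltac rw H := first [rwk 0%N H | rwk 1%N H | rwk 2%N H | rwk 3%N H | rwk 4%N H | rwk 5%N H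
  | rwk 6%N H | rwk 7%N H | rwk 8%N H | rwk 9%N H | rwk 10%N H | rwk 11%N H | rwk 12%N H].
Ltac rwr H := apply: br_sym; rw H; apply: br_sym.
Ltac canc := first [rw uconstr:(free1 _ _ _ _ _) | rw uconstr:(free2 _ _ _ _ _)].
Ltac ins1 k i b := rwk k uconstr:(@eqw_sym _ _ _ _ _ (@free1 _ _ _ i b)).
Ltac ins2 k i b := rwk k uconstr:(@eqw_sym _ _ _ _ _ (@free2 _ _ _ i b)).
Ltac done_w := apply: br_refl.
Ltac symw := apply: br_sym.
Ltac cancr := symw; canc; symw.

Section Rel.
Variables (A : zmodType) (mul : A -> A -> A).
Hypotheses (mulDl : left_distributive mul +%R) (mulDr : right_distributive mul +%R).
Variable m : nat.
Local Notation W := (word m.+2 A).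
Local Notation eqw := (@br_eq m.+2 A mul).
Local Notation ltr i b e := ((inord i : 'I_m.+1), b, e).

Lemma mul0x b : mul 0 b = 0.
Proof. have h := mulDl 0 0 b; rewrite addr0 in h.
by apply: (addrI (mul 0 b)); rewrite addr0 -h. Qed.
Lemma mulx0 b : mul b 0 = 0.
Proof. have h := mulDr b 0 0; rewrite addr0 in h.
by apply: (addrI (mul b 0)); rewrite addr0 -h. Qed.

Lemma r3 i (a b c : A) : (i < m)%N -> eqw [:: ltr i a false; ltr i.+1 b false; ltr i c false]
   [:: ltr i.+1 c false; ltr i (b + mul a c) false; ltr i.+1 a false].
Proof. move=> h; apply: br_rel3; rewrite !inordK //; lia. Qed.

Lemma r1 i (a : A) : eqw [:: ltr i a false; ltr i 0 false; ltr i 0 false]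
   [:: ltr i 0 false; ltr i 0 false; ltr i a false].
Proof. have := @br_rel1 m.+2 A mul (inord i) a 0. by rewrite addr0. Qed.

Lemma dist2 (i j : nat) : (i + 2 <= j)%N || (j + 2 <= i)%N -> (2 <= `|(i:nat) - (j:nat)|)%N.
Proof. lia. Qed.

Lemma far_ff (i j : 'I_m.+1) (a b : A) : (i + 2 <= j)%N || (j + 2 <= i)%N ->
  eqw [:: (i,a,false); (j,b,false)] [:: (j,b,false); (i,a,false)].
Proof. by move=> h; apply: br_rel2; apply: dist2. Qed.

Lemma far_tf (i j : 'I_m.+1) (a b : A) : (i + 2 <= j)%N || (j + 2 <= i)%N ->
  eqw [:: (i,a,true); (j,b,false)] [:: (j,b,false); (i,a,true)].
Proof.
move=> h.
have h' : eqw [:: (j,b,false); (i,a,false)] [:: (i,a,false); (j,b,false)].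
  by apply: far_ff; rewrite orbC.
ins1 2%N i a. rw h'. canc. done_w.
Qed.

Lemma far_ft (i j : 'I_m.+1) (a b : A) : (i + 2 <= j)%N || (j + 2 <= i)%N ->
  eqw [:: (i,a,false); (j,b,true)] [:: (j,b,true); (i,a,false)].
Proof.
move=> h.
have h' : eqw [:: (j,b,false); (i,a,false)] [:: (i,a,false); (j,b,false)].
  by apply: far_ff; rewrite orbC.
ins2 0%N j b. rw h'. canc. done_w.
Qed.

Lemma far_tt (i j : 'I_m.+1) (a b : A) : (i + 2 <= j)%N || (j + 2 <= i)%N ->
  eqw [:: (i,a,true); (j,b,true)] [:: (j,b,true); (i,a,true)].
Proof.
move=> h.
have h' : eqw [:: (j,b,false); (i,a,true)] [:: (i,a,true); (j,b,false)].
  exact: eqw_sym (far_tf i j a b h).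
ins2 0%N j b. rw h'. canc. done_w.
Qed.

Lemma far_l (i j : 'I_m.+1) (a b : A) e1 e2 : (i + 2 <= j)%N || (j + 2 <= i)%N ->
  eqw [:: (i,a,e1); (j,b,e2)] [:: (j,b,e2); (i,a,e1)].
Proof.
case: e1; case: e2; [exact: far_tt|exact: far_tf|exact: far_ft|exact: far_ff].
Qed.

Definition idx (l : letter m.+2 A) : nat := nat_of_ord l.1.1.
Definition farb (j : nat) (l : letter m.+2 A) := (idx l + 2 <= j)%N || (j + 2 <= idx l)%N.

Lemma far_w (w : W) (l : letter m.+2 A) : all (farb (idx l)) w -> eqw (w ++ [:: l]) (l :: w).
Proof.
elim: w => [|l' w IH] /=; first by move=> _; done_w.
case/andP=> h1 h2.
apply: (eqw_trans (w2 := l' :: l :: w)); first exact: (eqw_catl [:: l'] (IH h2)).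
move: h1; rewrite /farb /idx; clear IH h2.
case: l' => [[i' b'] e']; case: l => [[i b] e] /= h1.
exact: (eqw_catr w (far_l i' i b' b e' e h1)).
Qed.

Definition inv (w : W) : W := rev (map (@flip m.+2 A) w).

Lemma flipK : involutive (@flip m.+2 A).
Proof. by case=> [[i b] e]; rewrite /flip /= negbK. Qed.

Lemma inv_cat (u v : W) : inv (u ++ v) = inv v ++ inv u.
Proof. by rewrite /inv map_cat rev_cat. Qed.

Lemma invK (w : W) : inv (inv w) = w.
Proof. by rewrite /inv map_rev revK (mapK flipK). Qed.

Lemma inv_cons l (w : W) : inv (l :: w) = inv w ++ [:: flip l].
Proof. by rewrite /inv /= rev_cons cats1. Qed.

Lemma free_l (l : letter m.+2 A) : eqw [:: l; flip l] [::].
Proof. exact: br_free. Qed.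

Lemma free_r (l : letter m.+2 A) : eqw [:: flip l; l] [::].
Proof. by have := free_l (flip l); rewrite flipK. Qed.

Lemma mulV (w : W) : eqw (w ++ inv w) [::].
Proof.
elim: w => [|l w IH] /=; first done_w.
rewrite inv_cons catA.
apply: eqw_trans (eqw_catr [:: flip l] (eqw_catl [:: l] IH)) _ => /=.
exact: free_l.
Qed.

Lemma mulVl (w : W) : eqw (inv w ++ w) [::].
Proof. by have := mulV (inv w); rewrite invK. Qed.

Lemma cancel_l (u w1 w2 : W) : eqw (u ++ w1) (u ++ w2) -> eqw w1 w2.
Proof.
move=> h.
have h1 := eqw_catl (inv u) h. rewrite !catA in h1.
have e1 := eqw_catr w1 (mulVl u). have e2 := eqw_catr w2 (mulVl u).
exact: eqw_trans (eqw_sym e1) (eqw_trans h1 e2).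
Qed.

Lemma cancel_r (u w1 w2 : W) : eqw (w1 ++ u) (w2 ++ u) -> eqw w1 w2.
Proof.
move=> h.
have h1 := eqw_catr (inv u) h. rewrite -!catA in h1.
have e1 := eqw_catl w1 (mulV u). have e2 := eqw_catl w2 (mulV u).
rewrite !cats0 in e1 e2.
exact: eqw_trans (eqw_sym e1) (eqw_trans h1 e2).
Qed.

Lemma conj_inv (w a b : W) : eqw (w ++ a) (b ++ w) -> eqw (inv w ++ b) (a ++ inv w).
Proof.
move=> h.
have s1 : eqw (inv w ++ b) (inv w ++ (b ++ w) ++ inv w).
  have := eqw_catl (inv w ++ b) (eqw_sym (mulV w)). by rewrite cats0 !catA.
have s2 : eqw (inv w ++ (b ++ w) ++ inv w) ((inv w ++ w) ++ a ++ inv w).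
  have := eqw_catl (inv w) (eqw_catr (inv w) (eqw_sym h)). by rewrite !catA.
have s3 := eqw_catr (a ++ inv w) (mulVl w).
exact: eqw_trans s1 (eqw_trans s2 s3).
Qed.

Section Loc.
Variable i : nat.
Hypothesis hi : (i < m)%N.
Variable a : A.
Local Notation S b e := (ltr i b e).
Local Notation T b e := (ltr i.+1 b e).

Lemma rA : eqw [:: S a false; T 0 false; S 0 false] [:: T 0 false; S 0 false; T a false].
Proof. by have := r3 i a 0 0 hi; rewrite mulx0 add0r. Qed.
Lemma rC : eqw [:: S 0 false; T 0 false; S a false] [:: T a false; S 0 false; T 0 false].
Proof. by have := r3 i 0 0 a hi; rewrite mul0x add0r. Qed.
Lemma rB : eqw [:: S 0 false; T a false; S 0 false] [:: T 0 false; S a false; T 0 false].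
Proof. by have := r3 i 0 a 0 hi; rewrite mul0x addr0. Qed.
Lemma braid : eqw [:: S 0 false; T 0 false; S 0 false] [:: T 0 false; S 0 false; T 0 false].
Proof. by have := r3 i 0 0 0 hi; rewrite mul0x addr0. Qed.

Lemma B1 : eqw [:: S 0 true; T 0 false; S 0 false] [:: T 0 false; S 0 false; T 0 true].
Proof. ins1 3%N (inord i.+1 : 'I_m.+1) (0 : A). rw (eqw_sym braid). canc. done_w. Qed.
Lemma B3 : eqw [:: S 0 false; T 0 false; S 0 true] [:: T 0 true; S 0 false; T 0 false].
Proof. ins2 0%N (inord i.+1 : 'I_m.+1) (0 : A). rw (eqw_sym braid). canc. done_w. Qed.
Lemma B2 : eqw [:: T 0 true; S 0 false] [:: S 0 false; T 0 false; S 0 true; T 0 true].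
Proof. symw. rw B3. canc. done_w. Qed.

Lemma I1x : eqw [:: S a false; S 0 true; T 0 false; T 0 false] [:: T 0 false; T 0 false; S a false; S 0 true].
Proof.
apply: (cancel_r [:: S 0 false]); cbw.
ins1 3%N (inord i : 'I_m.+1) (0 : A). rw B1. rw B1. canc. rw rA. rw rB. canc.
cancr. done_w.
Qed.

Lemma L1x : eqw [:: T a false; T 0 true; S 0 false] [:: S 0 false; T 0 true; S a false; S 0 true; T 0 false].
Proof.
rw B2. rw (eqw_sym rC). apply: (eqw_catl [:: S 0 false]).
ins2 0%N (inord i.+1 : 'I_m.+1) (0 : A). rw (eqw_sym I1x). canc. done_w.
Qed.

Lemma L2x : eqw [:: T 0 true; S a false; S 0 true; T 0 false; S 0 false] [:: S 0 false; T a false; T 0 true].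
Proof. rw B1. rw rA. canc. done_w. Qed.

Lemma bxz : eqw [:: S a false; S 0 true; S 0 false] [:: S 0 false; S 0 true; S a false].
Proof. canc. cancr. done_w. Qed.

Lemma bzx : eqw [:: S 0 true; S a false; S 0 false] [:: S 0 false; S a false; S 0 true].
Proof. ins1 3%N (inord i : 'I_m.+1) (0 : A). rw (r1 i a). canc. done_w. Qed.

Lemma I1z : eqw [:: S 0 true; S a false; T 0 false; T 0 false] [:: T 0 false; T 0 false; S 0 true; S a false].
Proof.
apply: (cancel_l [:: S 0 false]); cbw. canc. symw.
ins2 2%N (inord i : 'I_m.+1) (0 : A). rw B3. rw B3. canc. rw rC. rw rB. canc. done_w.
Qed.

Lemma L1z : eqw [:: T 0 true; T a false; S 0 false] [:: S 0 false; T 0 true; S 0 true; S a false; T 0 false].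
Proof.
apply: (cancel_l [:: T 0 false]); cbw. canc. symw.
rw (eqw_sym B1). canc. rw (eqw_sym rB). canc. done_w.
Qed.

Lemma L2z : eqw [:: T 0 true; S 0 true; S a false; T 0 false; S 0 false] [:: S 0 false; T 0 true; T a false].
Proof. rw rA. rw B1. canc. done_w. Qed.

Lemma BQ : eqw [:: S 0 true; T 0 true; S 0 false; S 0 false; T 0 false] [:: T 0 false; T 0 false; S 0 true].
Proof.
apply: (cancel_l [:: T 0 false; S 0 false]); cbw. canc. canc. symw.
rw (eqw_sym braid). rw B3. canc. done_w.
Qed.

Lemma BQ' : eqw [:: S 0 false; T 0 false; T 0 false] [:: T 0 true; S 0 false; S 0 false; T 0 false; S 0 false].
Proof.
apply: (cancel_l [:: T 0 false]); cbw. rw (eqw_sym braid). symw. canc. rw braid. done_w.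
Qed.
End Loc.

Definition inr (lo hi : nat) (l : letter m.+2 A) := (lo <= idx l)%N && (idx l < hi)%N.

Lemma idx_ltr j b e : (j <= m)%N -> idx (ltr j b e) = j.
Proof. by move=> h; rewrite /idx /= inordK. Qed.

Lemma all_inv (P : pred (letter m.+2 A)) (w : W) : (forall l, P (flip l) = P l) ->
  all P (inv w) = all P w.
Proof. move=> h; rewrite /inv all_rev all_map; apply: eq_all => l /=; exact: h. Qed.

Lemma far_range (w : W) lo hi (l : letter m.+2 A) : all (inr lo hi) w ->
  (hi.+1 <= idx l)%N || (idx l + 2 <= lo)%N -> eqw (w ++ [:: l]) (l :: w).
Proof.
move=> hw hl; apply: far_w; apply: sub_all hw => l' /andP[h1 h2]; rewrite /farb; lia.
Qed.

Lemma far_range2 (w v : W) lo hi : all (inr lo hi) w ->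
  all (fun l => (hi.+1 <= idx l)%N || (idx l + 2 <= lo)%N) v -> eqw (w ++ v) (v ++ w).
Proof.
move=> hw; elim: v => [|l v IH] /=; first by rewrite cats0 => _; done_w.
case/andP=> h1 h2.
have e : w ++ l :: v = (w ++ [:: l]) ++ v by rewrite -catA.
rewrite e; apply: eqw_trans (eqw_catr v (far_range _ _ _ _ hw h1)) _ => /=.
exact: (eqw_catl [:: l] (IH h2)).
Qed.

Fixpoint Ur (s len : nat) : W :=
  if len is len'.+1 then ltr s 0 false :: Ur s.+1 len' else [::].

Lemma Ur_range s len : (s + len <= m.+1)%N -> all (inr s (s + len)) (Ur s len).
Proof.
elim: len s => [|len IH] s h //=.
apply/andP; split; first by rewrite /inr idx_ltr; lia.
apply: sub_all (IH s.+1 _); last by lia.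
move=> l /andP[h1 h2]; rewrite /inr; lia.
Qed.

Lemma Ur_snoc s len : Ur s len.+1 = Ur s len ++ [:: ltr (s + len) 0 false].
Proof.
elim: len s => [|len IH] s; first by rewrite /= addn0.
change (ltr s 0 false :: Ur s.+1 len.+1 = ltr s 0 false :: Ur s.+1 len ++ [:: ltr (s + len.+1) 0 false]).
by rewrite IH addSnnS.
Qed.

Lemma Ur_mid s len j : (s <= j)%N -> (j + 2 <= s + len)%N -> (s + len <= m.+1)%N ->
  eqw (Ur s len ++ [:: ltr j 0 false]) (ltr j.+1 0 false :: Ur s len).
Proof.
elim: len s => [|len IH] s h1 h2 h3; first by lia.
case: (ltnP s j) => hsj.
- rewrite /=. apply: (eqw_trans (w2 := [:: ltr s 0 false; ltr j.+1 0 false] ++ Ur s.+1 len)).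
    apply: (eqw_catl [:: ltr s 0 false]); apply: IH; lia.
  have hf : eqw [:: ltr s 0 false; ltr j.+1 0 false] [:: ltr j.+1 0 false; ltr s 0 false].
    by apply: far_l; rewrite !inordK; lia.
  exact: (eqw_catr (Ur s.+1 len) hf).
- have -> : j = s by lia.
  case: len IH h2 h3 => [|len] IH h2 h3; first by lia.
  rewrite /=.
  have hs : (s < m)%N by lia.
  have hf : eqw (Ur s.+2 len ++ [:: ltr s 0 false]) (ltr s 0 false :: Ur s.+2 len).
    apply: (far_range _ s.+2 (s.+2 + len)); first by apply: Ur_range; lia.
    rewrite idx_ltr; lia.
  apply: (eqw_trans (w2 := [:: ltr s 0 false; ltr s.+1 0 false; ltr s 0 false] ++ Ur s.+2 len)).
    exact: (eqw_catl [:: ltr s 0 false; ltr s.+1 0 false] hf).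
  exact: (eqw_catr (Ur s.+2 len) (braid s hs)).
Qed.

Definition U (p q : nat) : W := Ur p.+1 (q - p.+1).
Definition Xw (c : nat -> W) (p q : nat) : W := inv (U p q) ++ c p ++ U p q.
Definition tn (j p : nat) : nat := if p == j then j.+1 else if p == j.+1 then j else p.
Arguments U : simpl never.
Arguments inv : simpl never.
Arguments Xw : simpl never.

Lemma tn_other j p : p != j -> p != j.+1 -> tn j p = p.
Proof. by rewrite /tn => /negPf -> /negPf ->. Qed.
Lemma tn_j j : tn j j = j.+1.
Proof. by rewrite /tn eqxx. Qed.
Lemma tn_j1 j : tn j j.+1 = j.
Proof. by rewrite /tn eqxx; case: eqP => //; lia. Qed.

Lemma U_range p q : (p < q)%N -> (q <= m.+1)%N -> all (inr p.+1 q) (U p q).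
Proof. move=> h1 h2; have := Ur_range p.+1 (q - p.+1); rewrite /U subnKC //; apply; lia. Qed.

Lemma inv_range lo hi (w : W) : all (inr lo hi) w -> all (inr lo hi) (inv w).
Proof. by rewrite all_inv. Qed.

Lemma U_base p : U p p.+1 = [::].
Proof. by rewrite /U subnn. Qed.

Lemma U_snoc p q : (p < q)%N -> U p q.+1 = U p q ++ [:: ltr q 0 false].
Proof. move=> h; rewrite /U subSn // Ur_snoc subnKC //. Qed.

Lemma U_pred p q : (p.+1 < q)%N -> U p q = ltr p.+1 0 false :: U p.+1 q.
Proof. move=> h; rewrite /U; have -> : (q - p.+1 = (q - p.+2).+1)%N by lia. by []. Qed.

Lemma Xw_base c p : Xw c p p.+1 = c p.
Proof. by rewrite /Xw U_base /= cats0. Qed.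

Lemma Xw_snoc c p q : (p < q)%N -> Xw c p q.+1 = [:: ltr q 0 true] ++ Xw c p q ++ [:: ltr q 0 false].
Proof. move=> h; rewrite /Xw U_snoc // inv_cat -!catA. by []. Qed.

Section Fam.
Variable c : nat -> W.
Hypothesis Hidx : forall j, (j <= m)%N -> all (inr j j.+1) (c j).
Hypothesis HI1 : forall j, (j < m)%N ->
  eqw (c j ++ [:: ltr j.+1 0 false; ltr j.+1 0 false]) ([:: ltr j.+1 0 false; ltr j.+1 0 false] ++ c j).
Hypothesis HL1 : forall j, (j < m)%N ->
  eqw (c j.+1 ++ [:: ltr j 0 false]) ([:: ltr j 0 false; ltr j.+1 0 true] ++ c j ++ [:: ltr j.+1 0 false]).
Hypothesis HL2 : forall j, (j < m)%N ->
  eqw ([:: ltr j.+1 0 true] ++ c j ++ [:: ltr j.+1 0 false; ltr j 0 false]) ([:: ltr j 0 false] ++ c j.+1).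

Lemma Xw_range p q : (p < q)%N -> (q <= m.+1)%N -> all (inr p q) (Xw c p q).
Proof.
move=> h1 h2; rewrite /Xw !all_cat.
have hU := U_range p q h1 h2.
have hU' : all (inr p q) (U p q) by apply: sub_all hU => l /andP[a1 a2]; rewrite /inr; lia.
rewrite hU' (inv_range _ _ _ hU') /=.
have hc : all (inr p p.+1) (c p) by apply: Hidx; lia.
rewrite andbT; by apply: sub_all hc => l /andP[a1 a2]; rewrite /inr; lia.
Qed.

Lemma G6 p r : (p < r)%N -> (r <= m)%N ->
  eqw (Xw c p r ++ [:: ltr r 0 false; ltr r 0 false]) ([:: ltr r 0 false; ltr r 0 false] ++ Xw c p r).
Proof.
elim: r => [|r IH] hpr hrm; first by [].
case: (ltngtP p r) => hpr'; last first.
- subst r. rewrite Xw_base. apply: HI1; lia.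
- lia.
have hr : (r < m)%N by lia.
have IH' := IH hpr' (ltnW hrm).
rewrite Xw_snoc //.
have hX : all (inr p r) (Xw c p r) by apply: Xw_range; lia.
set X := Xw c p r in IH' hX *; clearbody X.
have f1 : eqw (X ++ [:: ltr r.+1 0 true]) (ltr r.+1 0 true :: X).
  apply: (far_range _ _ _ _ hX); rewrite idx_ltr; lia.
have f2 : eqw (X ++ [:: ltr r.+1 0 false]) (ltr r.+1 0 false :: X).
  apply: (far_range _ _ _ _ hX); rewrite idx_ltr; lia.
have h1 := eqw_catl (ltr r 0 true :: X) (BQ' r hr).
have h2 := eqw_catl [:: ltr r 0 true] (eqw_catr [:: ltr r 0 false; ltr r 0 false; ltr r.+1 0 false; ltr r 0 false] f1).
have h3 := eqw_catl [:: ltr r 0 true; ltr r.+1 0 true] (eqw_catr [:: ltr r.+1 0 false; ltr r 0 false] IH').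
have h4 := eqw_catl [:: ltr r 0 true; ltr r.+1 0 true; ltr r 0 false; ltr r 0 false] (eqw_catr [:: ltr r 0 false] f2).
have h5 := eqw_catr (X ++ [:: ltr r 0 false]) (BQ r hr).
rewrite -!catA /= in h1 h2 h3 h4 h5 *.
exact: eqw_trans h1 (eqw_trans h2 (eqw_trans h3 (eqw_trans h4 h5))).
Qed.


Lemma c_range j lo hi : (j <= m)%N -> (lo <= j)%N -> (j < hi)%N -> all (inr lo hi) (c j).
Proof.
move=> h1 h2 h3; have hc := Hidx j h1.
by apply: sub_all hc => l /andP[a1 a2]; rewrite /inr; lia.
Qed.

Lemma Gstep lo hi j : (lo < hi)%N -> (hi <= m.+1)%N -> (j <= m)%N -> ~ (j = lo /\ hi = lo.+1) ->
  eqw (Xw c lo hi ++ [:: ltr j 0 false]) ([:: ltr j 0 false] ++ Xw c (tn j lo) (tn j hi)).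
Proof.
move=> hlh hhm hjm hne.
have : ((j.+1 < lo)%N \/ (hi < j)%N) \/ j.+1 = lo \/ (j = lo /\ (lo.+1 < hi)%N) \/
   ((lo < j)%N /\ (j.+1 < hi)%N) \/ (j.+1 = hi /\ (lo < j)%N) \/ j = hi by lia.
case=> [hA|[hB|[[hC1 hC2]|[[hD1 hD2]|[[hE1 hE2]|hF]]]]].
- rewrite !tn_other; try lia.
  apply: (far_range _ lo hi); first exact: Xw_range.
  rewrite idx_ltr //; lia.
- subst lo. rewrite (tn_other j hi); try lia. rewrite tn_j1.
  rewrite /Xw (U_pred j hi) //= inv_cons.
  have hU := U_range j.+1 hi hlh hhm.
  set U' := U j.+1 hi in hU *; clearbody U'.
  have hj : (j < m)%N by lia.
  have fU : eqw (U' ++ [:: ltr j 0 false]) (ltr j 0 false :: U').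
    apply: (far_range _ _ _ _ hU); rewrite idx_ltr; lia.
  have fUi : eqw (inv U' ++ [:: ltr j 0 false]) (ltr j 0 false :: inv U').
    apply: (far_range _ _ _ _ (inv_range _ _ _ hU)); rewrite idx_ltr; lia.
  have k1 := eqw_catl (inv U' ++ c j.+1) fU.
  have k2 := eqw_catl (inv U') (eqw_catr U' (HL1 j hj)).
  have k3 := eqw_catr ([:: ltr j.+1 0 true] ++ c j ++ ltr j.+1 0 false :: U') fUi.
  rewrite /flip /= in k1 k2 k3 *; repeat rewrite -catA /= in k1; repeat rewrite -catA /= in k2; repeat rewrite -catA /= in k3; repeat rewrite -catA /=.
  exact: eqw_trans k1 (eqw_trans k2 k3).
- subst j. rewrite tn_j (tn_other lo hi); try lia.
  rewrite /Xw (U_pred lo hi) //= inv_cons.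
  have hU := U_range lo.+1 hi hC2 hhm.
  set U' := U lo.+1 hi in hU *; clearbody U'.
  have hj : (lo < m)%N by lia.
  have fU : eqw (U' ++ [:: ltr lo 0 false]) (ltr lo 0 false :: U').
    apply: (far_range _ _ _ _ hU); rewrite idx_ltr; lia.
  have fUi : eqw (inv U' ++ [:: ltr lo 0 false]) (ltr lo 0 false :: inv U').
    apply: (far_range _ _ _ _ (inv_range _ _ _ hU)); rewrite idx_ltr; lia.
  have k1 := eqw_catl (inv U' ++ ltr lo.+1 0 true :: c lo ++ [:: ltr lo.+1 0 false]) fU.
  have k2 := eqw_catl (inv U') (eqw_catr U' (HL2 lo hj)).
  have k3 := eqw_catr (c lo.+1 ++ U') fUi.
  rewrite /flip /= in k1 k2 k3 *; repeat rewrite -catA /= in k1; repeat rewrite -catA /= in k2; repeat rewrite -catA /= in k3; repeat rewrite -catA /=.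
  exact: eqw_trans k1 (eqw_trans k2 k3).
- rewrite !tn_other; try lia.
  have hm : eqw (U lo hi ++ [:: ltr j 0 false]) (ltr j.+1 0 false :: U lo hi).
    rewrite /U; apply: Ur_mid; lia.
  have hmi := conj_inv (U lo hi) [:: ltr j 0 false] [:: ltr j.+1 0 false] hm.
  have fc : eqw (c lo ++ [:: ltr j.+1 0 false]) (ltr j.+1 0 false :: c lo).
    apply: (far_range _ lo lo.+1); first by apply: Hidx; lia.
    rewrite idx_ltr; lia.
  rewrite /Xw.
  set U' := U lo hi in hm hmi *; clearbody U'.
  have k1 := eqw_catl (inv U' ++ c lo) hm.
  have k2 := eqw_catl (inv U') (eqw_catr U' fc).
  have k3 := eqw_catr (c lo ++ U') hmi.
  rewrite /flip /= in k1 k2 k3 *; repeat rewrite -catA /= in k1; repeat rewrite -catA /= in k2; repeat rewrite -catA /= in k3; repeat rewrite -catA /=.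
  exact: eqw_trans k1 (eqw_trans k2 k3).
- subst hi. rewrite tn_j1 (tn_other j lo); try lia.
  rewrite Xw_snoc //.
  have g := G6 lo j hE2 hjm.
  set X := Xw c lo j in g *; clearbody X.
  have k1 := eqw_catl [:: ltr j 0 true] g.
  have k2 := eqw_catr (ltr j 0 false :: X) (@free2 A mul m (inord j) 0).
  rewrite /flip /= in k1 k2 *; repeat rewrite -catA /= in k1; repeat rewrite -catA /= in k2; repeat rewrite -catA /=.
  exact: eqw_trans k1 k2.
- subst hi. rewrite tn_j (tn_other j lo); try lia.
  rewrite Xw_snoc //.
  set X := Xw c lo j; clearbody X.
  have k := eqw_catr (X ++ [:: ltr j 0 false]) (@free1 A mul m (inord j) 0).
  rewrite /flip /= in k *; repeat rewrite -catA /= in k; repeat rewrite -catA /=.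
  exact: eqw_sym k.
Qed.
End Fam.

Definition xw (a : A) (j : nat) : W := [:: ltr j a false; ltr j 0 true].
Definition zw (a : A) (j : nat) : W := [:: ltr j 0 true; ltr j a false].

Lemma xw_idx a j : (j <= m)%N -> all (inr j j.+1) (xw a j).
Proof. by move=> h; rewrite /= /inr !idx_ltr // leqnn ltnSn. Qed.
Lemma zw_idx a j : (j <= m)%N -> all (inr j j.+1) (zw a j).
Proof. by move=> h; rewrite /= /inr !idx_ltr // leqnn ltnSn. Qed.

Definition Xf (a : A) (p q : nat) : W := if (p < q)%N then Xw (xw a) p q else Xw (zw a) q p.

Lemma tn_lt j p q : (p < q)%N -> ~ (j = p /\ q = p.+1) -> (tn j p < tn j q)%N.
Proof. move=> h hn; rewrite /tn; repeat case: eqP; lia. Qed.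
Lemma tnK j p : tn j (tn j p) = p.
Proof. rewrite /tn; repeat case: eqP; lia. Qed.
Lemma tn_bound j p : (j <= m)%N -> (p <= m.+1)%N -> (tn j p <= m.+1)%N.
Proof. move=> h1 h2; rewrite /tn; repeat case: eqP; lia. Qed.
Lemma tn_neq j p q : p <> q -> tn j p <> tn j q.
Proof. move=> h; rewrite /tn; repeat case: eqP; lia. Qed.

Lemma Xstep a p q j : (p <= m.+1)%N -> (q <= m.+1)%N -> p <> q -> (j <= m)%N ->
  eqw (Xf a p q ++ [:: ltr j 0 false]) ([:: ltr j 0 false] ++ Xf a (tn j p) (tn j q)).
Proof.
move=> hp hq hpq hj.
case: (ltngtP p q) => hlt; last first.
  exfalso; exact: (hpq hlt).
- have [e1|hne] := (boolP ((j == q) && (p == q.+1))).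
  + move/andP: e1 => [/eqP e1 /eqP e2]; subst j p.
    rewrite tn_j tn_j1 /Xf ltnSn; have -> : (q.+1 < q)%N = false by lia.
    rewrite !Xw_base. exact: bzx.
  + have hne' : ~ (j = q /\ p = q.+1) by move=> [e1 e2]; subst; rewrite !eqxx in hne.
    have hlt' := tn_lt j q p hlt hne'.
    rewrite /Xf ltnNge (ltnW hlt) /= ltnNge (ltnW hlt') /=.
    apply: Gstep => //.
    * by move=> i hi; apply: zw_idx.
    * by move=> i hi; exact: I1z.
    * by move=> i hi; exact: L1z.
    * by move=> i hi; exact: L2z.
- have [e1|hne] := (boolP ((j == p) && (q == p.+1))).
  + move/andP: e1 => [/eqP e1 /eqP e2]; subst j q.
    rewrite tn_j tn_j1 /Xf ltnSn; have -> : (p.+1 < p)%N = false by lia.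
    rewrite !Xw_base. exact: bxz.
  + have hne' : ~ (j = p /\ q = p.+1) by move=> [e1 e2]; subst; rewrite !eqxx in hne.
    rewrite /Xf hlt (tn_lt j p q hlt hne').
    apply: Gstep => //.
    * by move=> i hi; apply: xw_idx.
    * by move=> i hi; exact: I1x.
    * by move=> i hi; exact: L1x.
    * by move=> i hi; exact: L2x.
Qed.

Lemma Xstep_inv a p q j : (p <= m.+1)%N -> (q <= m.+1)%N -> p <> q -> (j <= m)%N ->
  eqw (Xf a p q ++ [:: ltr j 0 true]) ([:: ltr j 0 true] ++ Xf a (tn j p) (tn j q)).
Proof.
move=> hp hq hpq hj.
have h := Xstep a (tn j p) (tn j q) j (tn_bound j p hj hp) (tn_bound j q hj hq) (tn_neq j p q hpq) hj.
rewrite !tnK in h.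
have := conj_inv [:: ltr j 0 false] (Xf a p q) (Xf a (tn j p) (tn j q)) (eqw_sym h).
by move/eqw_sym.
Qed.

Lemma Xstep_e a p q j e : (p <= m.+1)%N -> (q <= m.+1)%N -> p <> q -> (j <= m)%N ->
  eqw (Xf a p q ++ [:: ltr j 0 e]) ([:: ltr j 0 e] ++ Xf a (tn j p) (tn j q)).
Proof. case: e; [exact: Xstep_inv | exact: Xstep]. Qed.

Lemma tperm_inord j p : (j <= m)%N -> (p <= m.+1)%N ->
  tperm (inord j : 'I_m.+2) (inord j.+1) (inord p) = inord (tn j p).
Proof.
move=> hj hp; rewrite /tn.
case: (eqVneq p j) => [->|hpj]; first by rewrite tpermL.
case: (eqVneq p j.+1) => [->|hpj1]; first by rewrite tpermR.
rewrite tpermD //; apply/eqP => /(congr1 (@nat_of_ord _)); rewrite !inordK; lia.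
Qed.

Definition pv (w : aword m.+2) (p : nat) : nat := nat_of_ord (Defs.perm_of w (inord p : 'I_m.+2)).

Lemma pv_bound w p : (pv w p <= m.+1)%N.
Proof. rewrite /pv; by case: (Defs.perm_of w _) => /= x; rewrite ltnS. Qed.

Lemma pv_neq w p q : (p <= m.+1)%N -> (q <= m.+1)%N -> p <> q -> pv w p <> pv w q.
Proof.
move=> hp hq hpq; rewrite /pv => /val_inj /perm_inj /(congr1 (@nat_of_ord _)).
by rewrite !inordK.
Qed.

Lemma main_ind a (w : aword m.+2) p q : (p <= m.+1)%N -> (q <= m.+1)%N -> p <> q ->
  eqw (Xf a p q ++ embed A w) (embed A w ++ Xf a (pv w p) (pv w q)).
Proof.
elim: w p q => [|[jj e] w IH] p q hp hq hpq.
  by rewrite /pv /= !perm1 !inordK // cats0; done_w.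
have hj : (jj <= m)%N by rewrite -ltnS.
have hpv : forall r, (r <= m.+1)%N -> pv ((jj, e) :: w) r = pv w (tn jj r).
  move=> r hr; rewrite /pv /Defs.perm_of /= permM.
  by rewrite (tperm_inord jj r hj hr).
rewrite (hpv p hp) (hpv q hq).
have s1 := eqw_catr (embed A w) (Xstep_e a p q jj e hp hq hpq hj).
have s2 := eqw_catl [:: ltr jj 0 e] (IH _ _ (tn_bound jj p hj hp) (tn_bound jj q hj hq) (tn_neq jj p q hpq)).
rewrite inord_val -!catA /= in s1 s2.
exact: eqw_trans s1 s2.
Qed.
End Rel.

Lemma foldr_perm n (w : aword n) (z : {perm 'I_(n.-1).+1}) :
  foldr (fun (l : 'I_n.-1 * bool) p => (tperm (inord (l.1 : nat) : 'I_(n.-1).+1) (inord (l.1 : nat).+1) * p)%g) z w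
  = (Defs.perm_of w * z)%g.
Proof.
elim: w => [|l w IH] /=; first by rewrite mul1g.
by rewrite IH mulgA.
Qed.

Theorem lemma2p3 (A : zmodType) (mul : A -> A -> A)
  (mulA : associative mul)
  (mulDl : left_distributive mul +%R) (mulDr : right_distributive mul +%R)
  (n : nat) (hn : (2 <= n)%N) (k : 'I_n.-1) :
  (forall w : aword n, pure w ->
     exists w' : aword n, forall a : A,
       br_eq mul (G k a :: embed A w) (rcons (embed A w') (G k a)))
  /\
  (forall (a : A) (w : aword n), pure w ->
     br_eq mul ([:: G k a; Ginv k 0] ++ embed A w)
               (embed A w ++ [:: G k a; Ginv k 0])).
Proof.
case: n hn k => [|[|m]] // hn k.
have hk : (k <= m)%N by rewrite -ltnS; exact: (ltn_ord k).
have key : forall (a : A) (w : aword m.+2), pure w ->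
  br_eq mul ([:: G k a; Ginv k 0] ++ embed A w) (embed A w ++ [:: G k a; Ginv k 0]).
  move=> a w hw.
  have hk1 : (k.+1 <= m.+1)%N by [].
  have hk0 : (k <= m.+1)%N by apply: leqW.
  have hne : (k : nat) <> k.+1 by lia.
  have := @main_ind A mul mulDl mulDr m a w k k.+1 hk0 hk1 hne.
  rewrite /pv hw !perm1 !inordK // /Xf ltnSn Xw_base /xw inord_val.
  by [].
split; last exact: key.
move=> w hw. exists ((k, false) :: rcons w (k, true)) => a.
have hw' : pure ((k, false) :: rcons w (k, true)).
  rewrite /pure /= /Defs.perm_of foldr_rcons foldr_perm hw mul1g mulg1.
  exact: tperm2.
have K := key a _ hw'.
have f2 := @free2 A mul m k 0.
have s1 := eqw_catl [:: G k a] (eqw_catr (embed A w) (eqw_sym f2)).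
have s2 := eqw_catl ([:: G k a; Ginv k 0; G k 0] ++ embed A w) (eqw_sym f2).
have s3 := eqw_catr [:: G k 0] K.
have s4 := eqw_catl (embed A ((k, false) :: rcons w (k, true))) (eqw_catl [:: G k a] f2).
rewrite /embed /= map_rcons -!cats1 in s1 s2 s3 s4 *.
rewrite /G /Ginv /= in s1 s2 s3 s4 *.
repeat rewrite -catA /= in s1; repeat rewrite -catA /= in s2;
repeat rewrite -catA /= in s3; repeat rewrite -catA /= in s4; repeat rewrite -catA /=.
rewrite cats0 in s2.
exact: eqw_trans s1 (eqw_trans s2 (eqw_trans s3 s4)).
Qed.
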